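(* Consider an MLP with a single hidden layer of width $d_h\ge 2$, input dimension $d_i$ and output dimension $d_o$, with weight space $\mathcal{W}=\mathbb{R}^{d_h\times d_i}\oplus\mathbb{R}^{d_h}\oplus\mathbb{R}^{d_o\times d_h}\oplus\mathbb{R}^{d_o}$ (weights $\boldsymbol{\omega}=(\mathbf{W}_1,\mathbf{b}_1,\mathbf{W}_2,\mathbf{b}_2)$) equipped with the Euclidean norm, and let $G=S_{d_h}$ act on $\mathcal{W}$ by $\tau\cdot(\mathbf{W}_1,\mathbf{b}_1,\mathbf{W}_2,\mathbf{b}_2)=(\mathbf{P}_\tau^\top\mathbf{W}_1,\mathbf{P}_\tau^\top\mathbf{b}_1,\mathbf{W}_2\mathbf{P}_\tau,\mathbf{b}_2)$, where $\mathbf{P}_\tau$ is the permutation matrix of $\tau$. Then for every $\boldsymbol{\omega}\in\mathcal{W}$ there exists a non-identity $g\in G$ such that $$\lVert\boldsymbol{\omega}-g\cdot\boldsymbol{\omega}\rVert_2=\mathcal{O}\!\left(\frac{d_i+d_o}{\log(d_h)}\lVert\boldsymbol{\omega}\rVert_2\right),$$ where the implied constant is independent of $\boldsymbol{\omega}$, $d_i$, $d_o$, $d_h$. *)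

(* Defs.v *)
From Stdlib Require Import Reals.
From HB Require Import structures.
From mathcomp Require Import all_boot all_order all_algebra all_fingroup.
From mathcomp Require Import reals exp Rstruct.
Set Implicit Arguments. Unset Strict Implicit. Unset Printing Implicit Defensive.
Import Order.TTheory GRing.Theory Num.Theory.
Local Open Scope ring_scope.

Definition weights (di dh do : nat) : Type :=
  ('M[R]_(dh, di) * 'cV[R]_dh * 'M[R]_(do, dh) * 'cV[R]_do)%type.

Definition sqnorm_mx (m n : nat) (A : 'M[R]_(m, n)) : R :=
  \sum_(i < m) \sum_(j < n) A i j ^+ 2.

Definition wnorm (di dh do : nat) (w : weights di dh do) : R :=
  let: (W1, b1, W2, b2) := w in
  Num.sqrt (sqnorm_mx W1 + sqnorm_mx b1 + sqnorm_mx W2 + sqnorm_mx b2).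

Definition wsub (di dh do : nat) (w v : weights di dh do) : weights di dh do :=
  let: (W1, b1, W2, b2) := w in
  let: (V1, c1, V2, c2) := v in
  (W1 - V1, b1 - c1, W2 - V2, b2 - c2).

Definition wact (di dh do : nat) (tau : 'S_dh) (w : weights di dh do)
  : weights di dh do :=
  let: (W1, b1, W2, b2) := w in
  ((perm_mx tau)^T *m W1, (perm_mx tau)^T *m b1, W2 *m perm_mx tau, b2).

(* Main.v *)
Require Import Defs.
From Stdlib Require Import Reals.
From HB Require Import structures.
From mathcomp Require Import all_boot all_order all_algebra all_fingroup.
From mathcomp Require Import reals exp Rstruct.
Import Order.TTheory GRing.Theory Num.Theory.
Local Open Scope ring_scope.
From mathcomp Require Import ring lra.

Lemma sq_ineq (a b : R) : (a - b)^+2 + (b-a)^+2 <= 4 * (a^+2 + b^+2).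
Proof.
rewrite -subr_ge0. have -> : 4 * (a^+2 + b^+2) - ((a - b)^+2 + (b-a)^+2) = 2*(a+b)^+2 by ring.
by rewrite mulr_ge0 // sqr_ge0.
Qed.

Lemma swap_sq n (g : 'I_n -> R) (i j : 'I_n) :
  \sum_k (g k - g (tperm i j k))^+2 <= 4 * (g i ^+2 + g j ^+2).
Proof.
have [->|nij] := eqVneq i j.
  rewrite tperm1 big1 => [|k _]; last by rewrite perm1 subrr expr0n.
  by rewrite mulr_ge0 // addr_ge0 // sqr_ge0.
rewrite (bigD1 i) // (bigD1 j) /=; last by rewrite eq_sym.
rewrite big1 => [|k /andP[ki kj]]; last by rewrite tpermD 1?eq_sym // subrr expr0n.
by rewrite addr0 tpermL tpermR sq_ineq.
Qed.

Lemma row_sq m n (A : 'M[R]_(m, n)) (i j : 'I_m) :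
  sqnorm_mx (A - row_perm (tperm i j) A) <=
  4 * (\sum_l A i l ^+ 2 + \sum_l A j l ^+ 2).
Proof.
rewrite /sqnorm_mx exchange_big /= mulrDr !big_distrr -big_split /=.
apply: ler_sum => l _.
rewrite -mulrDr (eq_bigr (fun k => (A k l - A (tperm i j k) l)^+2)); [exact: swap_sq | by move=> k _; rewrite !mxE].
Qed.

Lemma col_sq m n (A : 'M[R]_(m, n)) (i j : 'I_n) :
  sqnorm_mx (A - col_perm (tperm i j) A) <=
  4 * (\sum_k A k i ^+ 2 + \sum_k A k j ^+ 2).
Proof.
rewrite /sqnorm_mx mulrDr !big_distrr -big_split /=.
apply: ler_sum => l _.
rewrite -mulrDr (eq_bigr (fun k => (A l k - A l (tperm i j k))^+2)); [exact: swap_sq | by move=> k _; rewrite !mxE].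
Qed.

Lemma two_small n (F : 'I_n.+2 -> R) : (forall k, 0 <= F k) ->
  exists i j, i != j /\ n.+2%:R * (F i + F j) <= 3 * \sum_k F k.
Proof.
move=> F0.
pose i := [arg min_(k < ord0) F k]%O.
have Hi : forall k, F i <= F k.
  rewrite /i; case: arg_minP => // k _ H x; exact: H.
pose j0 := lift i ord0.
have j0i : j0 != i by rewrite eq_sym neq_lift.
pose j := [arg min_(k < j0 | k != i) F k]%O.
have [ji Hj] : j != i /\ forall k, k != i -> F j <= F k.
  by rewrite /j; case: arg_minP => // k H1 H2; split.
exists i, j; split; first by rewrite eq_sym.
have S1 : n.+2%:R * F i <= \sum_k F k.
  have -> : n.+2%:R * F i = \sum_(k < n.+2) F i by rewrite sumr_const card_ord mulr_natl.
  by apply: ler_sum => k _.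
have S2 : n.+1%:R * F j <= \sum_k F k.
  rewrite (bigD1 i) //=.
  have -> : n.+1%:R * F j = \sum_(k | k != i) F j.
    by rewrite sumr_const cardC1 card_ord mulr_natl.
  rewrite -[X in X <= _]add0r lerD //; apply: ler_sum => k; exact: Hj.
have Fj := F0 j.
have e : n.+2%:R = n.+1%:R + 1 :> R by rewrite -natr1.
have n0 : 0 <= n%:R :> R by [].
have e2 : n.+1%:R = n%:R + 1 :> R by rewrite -natr1.
rewrite e e2 in S1 S2 *. nra.
Qed.

Lemma ln_sq (d : R) : 1 <= d -> ln d ^+ 2 <= 4 * d.
Proof.
move=> d1.
have d0 : 0 <= d by apply: le_trans d1.
set s := Num.sqrt d.
have s0 : 0 < s by rewrite sqrtr_gt0; apply: lt_le_trans d1.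
have ds : d = s ^+ 2 by rewrite sqr_sqrtr.
have L0 : 0 <= ln d by apply: ln_ge0.
have Ls : ln d < s *+ 2 by rewrite ds lnXn // ltrMn2r ln_sublinear.
rewrite [X in _ <= 4 * X]ds; rewrite mulr2n in Ls.
have h1 : 0 <= ln d * (s + s - ln d) by rewrite mulr_ge0 // subr_ge0 ltW.
have h2 : 0 <= s * (s + s - ln d) by rewrite mulr_ge0 ?ltW // subr_gt0.
nra.
Qed.

Theorem theorem3p1 :
  exists C : R, 0 < C /\
    forall (di dh do : nat), (1 <= di)%N -> (1 <= do)%N -> (2 <= dh)%N ->
    forall w : weights di dh do,
    exists tau : 'S_dh, tau != 1%g /\
      wnorm (wsub w (wact tau w))
        <= C * ((di + do)%:R / ln (dh%:R : R)) * wnorm w.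
Proof.
exists 4; split => // di dh d_o hi ho.
case: dh => [|[|n]] // _ [[[W1 b1] W2] b2].
pose F k := \sum_l W1 k l ^+ 2 + \sum_l b1 k l ^+ 2 + \sum_m W2 m k ^+ 2.
have F0 k : 0 <= F k.
  by rewrite !addr_ge0 // sumr_ge0 // => l _; rewrite sqr_ge0.
have [i [j [nij Hij]]] := @two_small n F F0.
exists (tperm i j); split.
  apply/eqP => /(congr1 (fun p : 'S_n.+2 => p i)); rewrite tpermL perm1 => /eqP.
  by rewrite eq_sym (negbTE nij).
rewrite /wnorm /wsub /wact /= tr_perm_mx tpermV -!row_permE.
have -> : W2 *m perm_mx (tperm i j) = col_perm (tperm i j) W2 by rewrite col_permE tpermV.
rewrite subrr.
have z0 : sqnorm_mx (0 : 'cV[R]_d_o) = 0.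
  by rewrite /sqnorm_mx big1 // => k _; rewrite big1 // => l _; rewrite mxE expr0n.
rewrite z0 addr0.
set S := \sum_k F k.
have eS : sqnorm_mx W1 + sqnorm_mx b1 + sqnorm_mx W2 = S.
  by rewrite /S /F !big_split /= /sqnorm_mx [X in _ + _ + X]exchange_big.
have Hd : sqnorm_mx (W1 - row_perm (tperm i j) W1) + sqnorm_mx (b1 - row_perm (tperm i j) b1)
   + sqnorm_mx (W2 - col_perm (tperm i j) W2) <= 4 * (F i + F j).
  have := @row_sq _ _ W1 i j; have := @row_sq _ _ b1 i j; have := @col_sq _ _ W2 i j.
  rewrite /F; lra.
rewrite eS.
set Qd := (X in Num.sqrt X <= _) in Hd *.
have b0 : 0 <= sqnorm_mx b2.
  by rewrite sumr_ge0 // => k _; rewrite sumr_ge0 // => l _; rewrite sqr_ge0.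
set Q := S + sqnorm_mx b2.
have SQ : S <= Q by rewrite /Q lerDl.
have S0 : 0 <= S by apply: sumr_ge0 => k _; apply: F0.
set L := ln _.
set a := (di + d_o)%:R.
set d := n.+2%:R : R.
have d1 : 1 <= d by rewrite /d ler1n.
have dp : 0 < d by apply: lt_le_trans d1.
have Lp : 0 < L by apply: ln_gt0; rewrite /d ltr1n.
have L2 : L ^+ 2 <= 4 * d by apply: ln_sq.
have a2 : 2 <= a by rewrite /a (ler_nat R 2); exact: (leq_add hi ho).
rewrite -mulrA; set K := 4 * (a / L).
have K0 : 0 <= K by rewrite /K mulr_ge0 // divr_ge0 // ?ltW // (le_trans _ a2).
have KL : K * L = 4 * a by rewrite /K -mulrA divfK // gt_eqF.
have KK : 16 <= K ^+ 2 * d.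
  have h1 := ler_wpM2l (sqr_ge0 K) L2.
  have h2 : K ^+ 2 * L ^+ 2 = 16 * a ^+ 2 by rewrite -exprMn KL; ring.
  have h3 : 4 <= a ^+ 2 by nra.
  move: h1; rewrite h2 => h1; lra.
have QdQ : Qd <= K ^+ 2 * Q.
  rewrite -(ler_pM2l dp).
  have h1 : d * Qd <= d * (4 * (F i + F j)) by rewrite ler_pM2l.
  have h2 : 16 * Q <= K ^+ 2 * d * Q by rewrite ler_wpM2r // ?(le_trans S0).
  rewrite /S in SQ S0; lra.
apply: (le_trans (ler_wsqrtr QdQ)).
rewrite sqrtrM ?sqr_ge0 // sqrtr_sqr ger0_norm // /K -mulrA. exact: lexx.
Qed.
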